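(* Let $\lambda$ be a well-behaved hypergraph width measure. For every hypergraph $H$ and every set $S\subseteq V(H)$, $\alpha_{\underline{H}}(S)\le\lambda_H(S)$.
   Context: A hypergraph $H$ has finite vertex set $V(H)$ and edge set $E(H)$ of subsets of $V(H)$; $||H||$ is the size of its encoding. The Gaifman graph $\underline{H}$ is the graph on $V(H)$ with two distinct vertices adjacent iff they lie in a common edge of $H$. For a graph $G$ and $S\subseteq V(G)$, $\alpha_G(S)$ is the maximum size of an independent set of $G$ contained in $S$. A width measure $\lambda$ assigns to each hypergraph $H$ a real function $\lambda_H$ on subsets of $V(H)$. $\lambda$ is well-behaved if: (1) $\lambda_H(\{x\})\ge1$; (2) $\lambda_H(S\cup T)\le\lambda_H(S)+\lambda_H(T)$; (3) equality in (2) for disjoint $S,T$ with no edge of $\underline{H}$ between them; (4) $\lambda_F(S)\le\lambda_H(T)$ whenever $V(H)\subseteq V(F)$, $E(H)\subseteq E(F)$ and $S\subseteq T$; (5) $\lambda_H(S)\le k$ is decidable in time $||H||^{O(k)}$. *)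

(* Defs.v *)
From mathcomp Require Import all_boot all_order all_algebra.
Set Implicit Arguments. Unset Strict Implicit. Unset Printing Implicit Defensive.
Import Order.TTheory GRing.Theory Num.Theory.

Record hypergraph (T : finType) := Hypergraph {
  hV : {set T};
  hE : {set {set T}};
  hE_sub : [forall e in hE, e \subset hV]
}.

Definition gaifman_adj (T : finType) (H : hypergraph T) (u v : T) : bool :=
  (u != v) && [exists e in hE H, (u \in e) && (v \in e)].

Definition gaifman_indep (T : finType) (H : hypergraph T) (I : {set T}) : bool :=
  [forall u in I, forall v in I, ~~ gaifman_adj H u v].

Definition gaifman_alpha (T : finType) (H : hypergraph T) (S : {set T}) : nat :=
  \max_(I : {set T} | (I \subset S) && gaifman_indep H I) #|I|.

Definition width_measure (R : realFieldType) :=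
  forall T : finType, hypergraph T -> {set T} -> R.

Local Open Scope ring_scope.

(* Conditions (1)-(4) of well-behavedness.  Condition (5) (algorithmic
   decidability) is not formalized. *)
Definition well_behaved (R : realFieldType) (lam : width_measure R) : Prop :=
  (forall (T : finType) (H : hypergraph T) (x : T),
      x \in hV H -> 1 <= lam T H [set x]) /\
  (forall (T : finType) (H : hypergraph T) (S S' : {set T}),
      S \subset hV H -> S' \subset hV H ->
      lam T H (S :|: S') <= lam T H S + lam T H S') /\
  (forall (T : finType) (H : hypergraph T) (S S' : {set T}),
      S \subset hV H -> S' \subset hV H -> [disjoint S & S'] ->
      (forall u v, u \in S -> v \in S' -> ~~ gaifman_adj H u v) ->
      lam T H (S :|: S') = lam T H S + lam T H S') /\
  (forall (T : finType) (H F : hypergraph T) (S S' : {set T}),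
      hV H \subset hV F -> hE H \subset hE F ->
      S \subset S' -> S' \subset hV H ->
      lam T F S <= lam T H S').

(* Main.v *)
Require Import Defs.
From mathcomp Require Import all_boot all_order all_algebra.
Import Order.TTheory GRing.Theory Num.Theory.
Local Open Scope ring_scope.

Lemma indep_card (R : realFieldType) (lam : width_measure R) :
  well_behaved lam ->
  forall (T : finType) (H : hypergraph T) (n : nat) (I : {set T}),
    #|I| = n -> I \subset hV H -> gaifman_indep H I -> (#|I|)%:R <= lam T H I.
Proof.
move=> [h1 [h2 [h3 h4]]] T H n; elim: n => [|n IH] I cI sI iI.
  have I0 : I = set0 by apply/eqP; rewrite -cards_eq0 cI.
  subst I.
  have d0 : [disjoint (set0 : {set T}) & (set0 : {set T})] by rewrite -setI_eq0 setI0.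
  have := h3 T H set0 set0 (sub0set _) (sub0set _) d0.
  have n0 : forall u v : T, u \in set0 -> v \in (set0 : {set T}) -> ~~ gaifman_adj H u v by move=> u v; rewrite inE.
  rewrite setU0 cards0 => /(_ n0) E.
  have -> : lam T H set0 = 0.
    have : lam T H set0 + 0 = lam T H set0 + lam T H set0 by rewrite addr0 -E.
    by move/addrI.
  by [].
have : (0 < #|I|)%N by rewrite cI.
case/card_gt0P => x xI.
have sx : [set x] \subset hV H by rewrite sub1set (subsetP sI).
have sI' : I :\ x \subset hV H by apply: subset_trans sI; apply: subsetDl.
have eI : I = [set x] :|: (I :\ x) by rewrite setD1K.
have iI' : gaifman_indep H (I :\ x).
  apply/forallP => u; apply/implyP => uI; apply/forallP => v; apply/implyP => vI.
  move: iI => /forallP /(_ u) /implyP; rewrite (subsetP (subsetDl I [set x])) //.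
  by move=> /(_ isT) /forallP /(_ v) /implyP; rewrite (subsetP (subsetDl I [set x])) //; apply.
have cI' : #|I :\ x| = n by move: cI; rewrite (cardsD1 x) xI add1n => -[].
have := h3 T H [set x] (I :\ x) sx sI'.
rewrite disjoints1 !inE eqxx /= => /(_ isT).
have nadj : forall u v, u \in [set x] -> v \in I :\ x -> ~~ gaifman_adj H u v.
  move=> u v; rewrite inE => /eqP -> vI.
  move: iI => /forallP /(_ x) /implyP /(_ xI) /forallP /(_ v) /implyP; apply.
  by move: vI; rewrite inE => /andP[].
move=> /(_ nadj); rewrite -eI => ->.
rewrite (cardsD1 x I) xI add1n -addn1 natrD addrC.
apply: lerD; first by apply: h1; rewrite (subsetP sI).
by have := IH _ cI' sI' iI'.
Qed.

Theorem mainTheorem16 (R : realFieldType) (lam : width_measure R) :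
  well_behaved lam ->
  forall (T : finType) (H : hypergraph T) (S : {set T}),
    S \subset hV H -> (gaifman_alpha H S)%:R <= lam T H S.
Proof.
move=> wb T H S sS.
have key : forall I : {set T}, (I \subset S) && gaifman_indep H I ->
    (#|I|)%:R <= lam T H S.
  move=> I /andP[sIS iI].
  have sI : I \subset hV H := subset_trans sIS sS.
  apply: (le_trans (@indep_card R lam wb T H #|I| I erefl sI iI)).
  by case: wb => _ [_ [_ h4]]; apply: h4.
rewrite /gaifman_alpha.
apply: (big_ind (fun n : nat => n%:R <= lam T H S)) => //.
- have := key set0; rewrite sub0set cards0; apply.
  by apply/forallP => u; rewrite inE.
- by move=> a b ha hb; rewrite /maxn; case: ltnP.
Qed.
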